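(* Let $R=R_0\oplus R_1\oplus\cdots\oplus R_{p-1}$ be a commutative $\mathbb Z/p\mathbb Z$-graded $F$-algebra and $I=\sum_{i+j=p}R_iR_j\subset R_0$ (sum over $1\le i,j\le p-1$). The following are equivalent: (1) $X^G=\emptyset$, where $X^G=\mathrm{Spec}(R_0/I)$; (2) $I=R_0$; (3) $R_i^p=R_0$ for all $i=1,\dots,p-1$; (4) $R_1^p=R_0$; (5) $R_iR_{p-i}=R_0$ for each $i=1,\dots,p-1$; (6) for all $k,l\in\{0,\dots,p-1\}$ the multiplication map $R_k\otimes_{R_0}R_l\to R_{k+l}$ (index mod $p$) is an isomorphism; (7) the homomorphism $\Phi:R\otimes_{R_0}R\to F[t]/(t^p-1)\otimes_F R$ given by $a_k\otimes b_l\mapsto t^k\otimes a_kb_l$ for $a_k\in R_k$, $b_l\in R_l$ is an isomorphism.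
   Context: $p$ is a prime and $F$ a field. A $\mathbb Z/p\mathbb Z$-grading of $R$ corresponds to an action of $G=\mu_p=\mathrm{Spec}\,F[t]/(t^p-1)$ on $X=\mathrm{Spec}\,R$, with coaction $r_0+\cdots+r_{p-1}\mapsto\sum_i t^i\otimes r_i$. $R_i^p$ denotes the additive subgroup of $R$ generated by products of $p$ elements of $R_i$ (it lies in $R_0$); $R_iR_j$ likewise denotes the additive span of products. *)

(* Defs.v *)
From HB Require Import structures.
From mathcomp Require Import all_boot all_order all_algebra.
Set Implicit Arguments. Unset Strict Implicit. Unset Printing Implicit Defensive.
Import GRing.Theory.
Local Open Scope ring_scope.

Section GradedDefs.
Variables (F : fieldType) (R : comAlgType F).

(* A Z/pZ-grading of the F-algebra R, given by the family of projections
   pr i : R -> R_i (i < p), i.e. r = r_0 + ... + r_{p-1} with r_i = pr i r.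
   (This is the same datum as the coaction r |-> sum_i t^i (x) r_i.) *)
Definition Zp_grading (p : nat) (pr : nat -> R -> R) : Prop :=
  [/\ forall i, (i < p)%N -> forall x y, pr i (x + y) = pr i x + pr i y,
      forall i, (i < p)%N -> forall (a : F) x, pr i (a *: x) = a *: pr i x,
      forall x, x = \sum_(i < p) pr i x,
      forall i j, (i < p)%N -> (j < p)%N -> forall x,
        pr i (pr j x) = (if i == j then pr j x else 0) &
      forall i j, (i < p)%N -> (j < p)%N -> forall x y,
        pr i x = x -> pr j y = y -> pr ((i + j) %% p)%N (x * y) = x * y].

Definition hcomp (pr : nat -> R -> R) (i : nat) : R -> Prop := fun x => pr i x = x.

Definition addspan (S : R -> Prop) : R -> Prop :=
  fun x => exists s : seq (int * R),
    (forall c, c \in s -> S c.2) /\ x = \sum_(c <- s) c.2 *~ c.1.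

Definition prodspan (A B : R -> Prop) : R -> Prop :=
  addspan (fun x => exists a b, [/\ A a, B b & x = a * b]).

Definition powspan (A : R -> Prop) (n : nat) : R -> Prop :=
  addspan (fun x => exists a : 'I_n -> R, (forall j, A (a j)) /\ x = \prod_(j < n) a j).

Definition fixed_ideal (p : nat) (pr : nat -> R -> R) : R -> Prop :=
  addspan (fun x => exists i a b,
    [/\ (0 < i < p)%N, hcomp pr i a, hcomp pr (p - i)%N b & x = a * b]).

Definition prime_ideal_in (S P : R -> Prop) : Prop :=
  [/\ forall x, P x -> S x, P 0, forall x y, P x -> P y -> P (x - y) &
      forall s x, S s -> P x -> P (s * x)] /\
  ~ P 1 /\ (forall x y, S x -> S y -> P (x * y) -> P x \/ P y).

(* Spec(S / I) = empty: no prime ideal of S/I, i.e. (correspondence theorem)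
   no prime ideal of S containing I. *)
Definition spec_quot_empty (S I : R -> Prop) : Prop :=
  ~ exists P, prime_ideal_in S P /\ (forall x, I x -> P x).

(* Tensor product A (x)_S B of S-modules A, B (sub-S-modules of R):
   formal sums (lists) of pairs (a, b), a in A, b in B, modulo the
   congruence generated by bilinearity and S-balancedness. *)
Inductive tens_equiv (S A B : R -> Prop) : seq (R * R) -> seq (R * R) -> Prop :=
| te_refl s : tens_equiv S A B s s
| te_sym s t : tens_equiv S A B s t -> tens_equiv S A B t s
| te_trans s t u : tens_equiv S A B s t -> tens_equiv S A B t u -> tens_equiv S A B s u
| te_cat s s' t t' : tens_equiv S A B s t -> tens_equiv S A B s' t' ->
    tens_equiv S A B (s ++ s') (t ++ t')
| te_swap s t : tens_equiv S A B (s ++ t) (t ++ s)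
| te_addl a a' b : A a -> A a' -> B b ->
    tens_equiv S A B [:: (a + a', b)] [:: (a, b); (a', b)]
| te_addr a b b' : A a -> B b -> B b' ->
    tens_equiv S A B [:: (a, b + b')] [:: (a, b); (a, b')]
| te_zerol b : B b -> tens_equiv S A B [:: (0, b)] [::]
| te_zeror a : A a -> tens_equiv S A B [:: (a, 0)] [::]
| te_bal s a b : S s -> A a -> B b ->
    tens_equiv S A B [:: (s * a, b)] [:: (a, s * b)].

Definition in_pairs (A B : R -> Prop) (s : seq (R * R)) : Prop :=
  forall x, x \in s -> A x.1 /\ B x.2.

(* The map A (x)_S B -> C induced by the balanced biadditive map phi
   (a (x) b |-> phi a b) is an isomorphism onto C. *)
Definition tensor_iso (S A B : R -> Prop) (T : zmodType) (phi : R -> R -> T)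
    (C : T -> Prop) : Prop :=
  [/\ forall s, in_pairs A B s -> C (\sum_(x <- s) phi x.1 x.2),
      forall c, C c -> exists s, in_pairs A B s /\ c = \sum_(x <- s) phi x.1 x.2 &
      forall s t, in_pairs A B s -> in_pairs A B t ->
        \sum_(x <- s) phi x.1 x.2 = \sum_(x <- t) phi x.1 x.2 ->
        tens_equiv S A B s t].

(* Phi : R (x)_{R_0} R -> F[t]/(t^p-1) (x)_F R, where the target is identified
   with {ffun 'I_p -> R} via the F-basis 1, t, ..., t^(p-1):
   a (x) b |-> sum_k t^k (x) a_k b. *)
Definition Phi_map (p : nat) (pr : nat -> R -> R) (a b : R) : {ffun 'I_p -> R} :=
  [ffun k : 'I_p => pr k a * b].

End GradedDefs.

(* Main.v *)
Require Import Defs.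
From HB Require Import structures.
From mathcomp Require Import all_boot all_order all_algebra.
From mathcomp Require Import zify ring.
From mathcomp Require Import boolp classical_sets.
Import GRing.Theory.
Set Implicit Arguments. Unset Strict Implicit.
Local Open Scope ring_scope.

Section Tens.
Variables (F : fieldType) (R : comAlgType F) (S A B : R -> Prop).
Local Notation TE := (tens_equiv S A B).

Lemma te_rearr (x X y Y : seq (R * R)) : TE ((x ++ X) ++ (y ++ Y)) ((x ++ y) ++ (X ++ Y)).
Proof.
rewrite -!catA; apply: te_cat; first exact: te_refl.
rewrite !catA; apply: te_cat; last exact: te_refl.
exact: te_swap.
Qed.

Lemma te_flat (I : eqType) (l : seq I) (f g : I -> seq (R * R)) :
  (forall i, i \in l -> TE (f i) (g i)) ->
  TE (flatten (map f l)) (flatten (map g l)).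
Proof.
elim: l => [|i l IH] h /=; first exact: te_refl.
apply: te_cat; first by apply: h; rewrite mem_head.
by apply: IH => j jl; apply: h; rewrite inE jl orbT.
Qed.

Lemma te_flat_nil (I : eqType) (l : seq I) (f : I -> seq (R * R)) :
  (forall i, i \in l -> TE [::] (f i)) -> TE [::] (flatten (map f l)).
Proof.
elim: l => [|i l IH] h /=; first exact: te_refl.
apply: (@te_cat _ _ _ _ _ [::] [::] _ _); first by apply: h; rewrite mem_head.
by apply: IH => j jl; apply: h; rewrite inE jl orbT.
Qed.

Lemma te_flat_merge (I : Type) (l : seq I) (f g : I -> seq (R * R)) :
  TE (flatten (map f l) ++ flatten (map g l)) (flatten (map (fun i => f i ++ g i) l)).
Proof.
elim: l => [|i l IH] /=; first exact: te_refl.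
apply: te_trans (te_rearr _ _ _ _) _.
apply: te_cat; first exact: te_refl.
exact: IH.
Qed.

Lemma te_map1 (I : eqType) (l : seq I) (f g : I -> R * R) :
  (forall i, i \in l -> TE [:: f i] [:: g i]) -> TE (map f l) (map g l).
Proof.
elim: l => [|i l IH] h /=; first exact: te_refl.
apply: (@te_cat _ _ _ _ _ [:: _] _ [:: _] _); first by apply: h; rewrite mem_head.
by apply: IH => j jl; apply: h; rewrite inE jl orbT.
Qed.

Lemma te_addl_list (ys : seq R) b :
  A 0 -> (forall x y, A x -> A y -> A (x + y)) -> B b ->
  (forall y, y \in ys -> A y) ->
  TE [:: (\sum_(y <- ys) y, b)] [seq (y, b) | y <- ys].
Proof.
move=> A0 AD Bb; elim: ys => [|y ys IH] h /=.
  by rewrite big_nil; exact: te_zerol.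
have Ay : A y by apply: h; rewrite mem_head.
have h' : forall z, z \in ys -> A z by move=> z zs; apply: h; rewrite inE zs orbT.
have As : A (\sum_(z <- ys) z).
  elim: (ys) h' => [|z zs IH2] h2; first by rewrite big_nil.
  rewrite big_cons; apply: AD; first by apply: h2; rewrite mem_head.
  by apply: IH2 => w ws; apply: h2; rewrite inE ws orbT.
rewrite big_cons; apply: te_trans (te_addl S Ay As Bb) _.
apply: (@te_cat _ _ _ _ _ [:: _] _ [:: _] _); first exact: te_refl.
exact: IH.
Qed.

Definition CU (U : seq (R * R)) (c : R) := [seq (uv.1, uv.2 * c) | uv <- U].

Lemma CU_zero U : (forall uv, uv \in U -> A uv.1) -> TE [::] (CU U 0).
Proof.
elim: U => [|uv U IH] h /=; first exact: te_refl.
rewrite mulr0; apply: (@te_cat _ _ _ _ _ [::] [::] [:: _] _).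
  by apply: te_sym; apply: te_zeror; apply: h; rewrite mem_head.
by apply: IH => w ws; apply: h; rewrite inE ws orbT.
Qed.

Lemma CU_add U c d :
  (forall uv, uv \in U -> [/\ A uv.1, B (uv.2 * c) & B (uv.2 * d)]) ->
  TE (CU U c ++ CU U d) (CU U (c + d)).
Proof.
elim: U => [|uv U IH] h /=; first exact: te_refl.
have [h1 h2 h3] := h uv (mem_head _ _).
apply: te_trans (te_rearr [:: _] _ [:: _] _) _.
apply: (@te_cat _ _ _ _ _ [:: _; _] _ [:: _] _).
  by rewrite mulrDr; apply: te_sym; apply: te_addr.
by apply: IH => w ws; apply: h; rewrite inE ws orbT.
Qed.

Lemma pair_canon (U : seq (R * R)) x b :
  A 0 -> (forall y z, A y -> A z -> A (y + z)) -> B b ->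
  (forall uv, uv \in U -> [/\ A uv.1, A ((uv.2 * x) * uv.1) & S (uv.2 * x)]) ->
  x = \sum_(uv <- U) (uv.2 * x) * uv.1 ->
  TE [:: (x, b)] (CU U (x * b)).
Proof.
move=> A0 AD Bb h hx.
rewrite {1}hx -(big_map (fun uv => (uv.2 * x) * uv.1) predT id).
apply: te_trans (te_addl_list A0 AD Bb _) _.
  by move=> y /mapP [uv uvU ->]; have [] := h uv uvU.
rewrite /CU -map_comp; apply: te_map1 => uv uvU /=.
have [h1 h2 h3] := h uv uvU.
rewrite mulrA; exact: te_bal.
Qed.

Lemma canon_sum (T : zmodType) (phi : R -> R -> T) (D : T -> Prop) (C : T -> seq (R * R)) :
  D 0 -> (forall x y, D x -> D y -> D (x + y)) -> (forall a b, A a -> B b -> D (phi a b)) ->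
  TE [::] (C 0) ->
  (forall x y, D x -> D y -> TE (C x ++ C y) (C (x + y))) ->
  (forall a b, A a -> B b -> TE [:: (a, b)] (C (phi a b))) ->
  forall s, in_pairs A B s ->
    D (\sum_(x <- s) phi x.1 x.2) /\ TE s (C (\sum_(x <- s) phi x.1 x.2)).
Proof.
move=> D0 DD Dphi C0 CD Cphi; elim=> [|[a b] s IH] hs.
  by rewrite big_nil.
have [Aa Bb] := hs _ (mem_head _ _).
have [IH1 IH2] := IH (fun z zs => hs z (@mem_behead _ ((a, b) :: s) z zs)).
rewrite big_cons /=; split; first exact: (DD _ _ (Dphi _ _ Aa Bb) IH1).
apply: te_trans (CD _ _ (Dphi _ _ Aa Bb) IH1).
exact: (@te_cat _ _ _ _ _ [:: _] _ _ _ (Cphi _ _ Aa Bb) IH2).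
Qed.

Lemma canon_inj (T : zmodType) (phi : R -> R -> T) (D : T -> Prop) (C : T -> seq (R * R)) :
  D 0 -> (forall x y, D x -> D y -> D (x + y)) -> (forall a b, A a -> B b -> D (phi a b)) ->
  TE [::] (C 0) ->
  (forall x y, D x -> D y -> TE (C x ++ C y) (C (x + y))) ->
  (forall a b, A a -> B b -> TE [:: (a, b)] (C (phi a b))) ->
  forall s t, in_pairs A B s -> in_pairs A B t ->
    \sum_(x <- s) phi x.1 x.2 = \sum_(x <- t) phi x.1 x.2 -> TE s t.
Proof.
move=> D0 DD Dphi C0 CD Cphi s t hs ht e.
have [_ h1] := canon_sum D0 DD Dphi C0 CD Cphi hs.
have [_ h2] := canon_sum D0 DD Dphi C0 CD Cphi ht.
rewrite e in h1; exact: te_trans h1 (te_sym h2).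
Qed.

End Tens.
Section Span.
Variables (F : fieldType) (R : comAlgType F).

Lemma as_in (S : R -> Prop) x : S x -> addspan S x.
Proof. move=> Sx; exists [:: (1%:Z, x)]; split; last by rewrite big_seq1.
by move=> c; rewrite inE => /eqP ->. Qed.

Lemma as_ind (S Q : R -> Prop) :
  Q 0 -> (forall x y, Q x -> Q y -> Q (x + y)) -> (forall x n, S x -> Q (x *~ n)) ->
  forall x, addspan S x -> Q x.
Proof.
move=> Q0 QD Qz x [s [hs ->]]; elim: s hs => [|c s IH] hs; first by rewrite big_nil.
rewrite big_cons; apply: QD; first by apply: Qz; apply: hs; rewrite mem_head.
by apply: IH => d ds; apply: hs; rewrite inE ds orbT.
Qed.

Lemma as0 (S : R -> Prop) : addspan S 0.
Proof. by exists [::]; split; rewrite ?big_nil. Qed.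

Lemma asD (S : R -> Prop) x y : addspan S x -> addspan S y -> addspan S (x + y).
Proof.
move=> [s [hs ->]] [t [ht ->]]; exists (s ++ t); split; last by rewrite big_cat.
by move=> c; rewrite mem_cat => /orP [/hs|/ht].
Qed.

Lemma asz (S : R -> Prop) x n : S x -> addspan S (x *~ n).
Proof. move=> Sx; exists [:: (n, x)]; split; last by rewrite big_seq1.
by move=> c; rewrite inE => /eqP ->. Qed.

Lemma asN (S : R -> Prop) x : addspan S x -> addspan S (- x).
Proof.
move=> [s [hs ->]]; exists [seq (- c.1, c.2) | c <- s]; split.
  by move=> c /mapP [d ds ->] /=; apply: hs.
rewrite big_map -sumrN; apply: eq_bigr => c _ /=; by rewrite mulrNz.
Qed.

Lemma asB (S : R -> Prop) x y : addspan S x -> addspan S y -> addspan S (x - y).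
Proof. by move=> hx hy; apply: asD => //; apply: asN. Qed.

Lemma as_mul (S : R -> Prop) s x : (forall y, S y -> S (s * y)) ->
  addspan S x -> addspan S (s * x).
Proof.
move=> hS [l [hl ->]]; exists [seq (c.1, s * c.2) | c <- l]; split.
  by move=> c /mapP [d dl ->] /=; apply: hS; apply: hl.
rewrite big_map mulr_sumr; apply: eq_bigr => c _ /=; by rewrite mulrzAr.
Qed.

Lemma as_mul2 (S S' : R -> Prop) s x : (forall y, S y -> S' (s * y)) ->
  addspan S x -> addspan S' (s * x).
Proof.
move=> hS [l [hl ->]]; exists [seq (c.1, s * c.2) | c <- l]; split.
  by move=> c /mapP [d dl ->] /=; apply: hS; apply: hl.
rewrite big_map mulr_sumr; apply: eq_bigr => c _ /=; by rewrite mulrzAr.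
Qed.

Lemma as_sum (S : R -> Prop) (I : eqType) (l : seq I) (f : I -> R) :
  (forall i, i \in l -> addspan S (f i)) -> addspan S (\sum_(i <- l) f i).
Proof.
elim: l => [|i l IH] h; first by rewrite big_nil; exact: as0.
rewrite big_cons; apply: asD; first by apply: h; rewrite mem_head.
by apply: IH => j jl; apply: h; rewrite inE jl orbT.
Qed.

Lemma as_mono (S S' : R -> Prop) x : (forall y, S y -> S' y) -> addspan S x -> addspan S' x.
Proof. move=> h [l [hl ->]]; exists l; split => // c cl; exact/h/hl. Qed.

Lemma prodspan_list (A B : R -> Prop) x :
  (forall a n, A a -> A (a *~ n)) -> prodspan A B x ->
  exists s, in_pairs A B s /\ x = \sum_(c <- s) c.1 * c.2.
Proof.
move=> Az [l [hl ->]]; elim: l hl => [|c l IH] hl.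
  by exists [::]; split; rewrite ?big_nil // => c.
have [a [b [Aa Bb e]]] := hl c (mem_head _ _).
have [s [hs es]] := IH (fun d dl => hl d (@mem_behead _ (c :: l) d dl)).
exists ((a *~ c.1, b) :: s); split.
  move=> d; rewrite inE => /orP [/eqP -> /=|ds]; last exact: hs.
  by split=> //; apply: Az.
by rewrite !big_cons es e mulrzAl.
Qed.

Lemma list_prodspan (A B : R -> Prop) s :
  in_pairs A B s -> prodspan A B (\sum_(c <- s) c.1 * c.2).
Proof.
move=> hs; apply: as_sum => c cs; apply: as_in.
by have [h1 h2] := hs c cs; exists c.1, c.2.
Qed.

End Span.
Section Grad.
Variables (F : fieldType) (R : comAlgType F) (p : nat) (pr : nat -> R -> R).
Hypothesis pP : prime p.
Hypothesis G : Zp_grading p pr.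
Local Notation H := (hcomp pr).

Lemma p_gt0 : (0 < p)%N. Proof. exact: prime_gt0. Qed.
Lemma p_gt1 : (1 < p)%N. Proof. exact: prime_gt1. Qed.

Lemma prD i : (i < p)%N -> forall x y, pr i (x + y) = pr i x + pr i y.
Proof. by have [h _ _ _ _] := G; exact: h. Qed.
Lemma pr_sumE x : x = \sum_(i < p) pr i x.
Proof. by have [_ _ h _ _] := G; exact: h. Qed.
Lemma prpr i j : (i < p)%N -> (j < p)%N -> forall x,
  pr i (pr j x) = (if i == j then pr j x else 0).
Proof. by have [_ _ _ h _] := G; exact: h. Qed.
Lemma prM i j : (i < p)%N -> (j < p)%N -> forall x y,
  H i x -> H j y -> H ((i + j) %% p)%N (x * y).
Proof. by have [_ _ _ _ h] := G; exact: h. Qed.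

Lemma pr0 i : (i < p)%N -> pr i 0 = 0.
Proof. move=> ip; have h := prD ip 0 0; rewrite addr0 in h.
by apply/(addrI (pr i 0)); rewrite addr0 -h. Qed.
Lemma prN i : (i < p)%N -> forall x, pr i (- x) = - pr i x.
Proof. move=> ip x; apply/eqP; rewrite -addr_eq0 -prD // addNr pr0 //. Qed.
Lemma prB i : (i < p)%N -> forall x y, pr i (x - y) = pr i x - pr i y.
Proof. by move=> ip x y; rewrite prD // prN. Qed.
Lemma prn i : (i < p)%N -> forall x (n : nat), pr i (x *+ n) = pr i x *+ n.
Proof.
move=> ip x; elim=> [|n IH]; first by rewrite !mulr0n pr0.
by rewrite !mulrS prD // IH.
Qed.
Lemma prz i : (i < p)%N -> forall x (n : int), pr i (x *~ n) = pr i x *~ n.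
Proof.
move=> ip x [] n; first exact: (prn ip x n).
by rewrite !NegzE !mulrNz prN //; congr (- _); exact: (prn ip x n.+1).
Qed.
Lemma prsum i (I : Type) (s : seq I) (f : I -> R) : (i < p)%N ->
  pr i (\sum_(x <- s) f x) = \sum_(x <- s) pr i (f x).
Proof.
move=> ip; elim: s => [|a s IH]; first by rewrite !big_nil pr0.
by rewrite !big_cons prD // IH.
Qed.

Lemma Hzero i : (i < p)%N -> H i 0. Proof. by move=> ip; rewrite /hcomp pr0. Qed.
Lemma HD i x y : (i < p)%N -> H i x -> H i y -> H i (x + y).
Proof. by move=> ip hx hy; rewrite /hcomp prD // hx hy. Qed.
Lemma HN i x : (i < p)%N -> H i x -> H i (- x).
Proof. by move=> ip hx; rewrite /hcomp prN // hx. Qed.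
Lemma HB i x y : (i < p)%N -> H i x -> H i y -> H i (x - y).
Proof. by move=> ip hx hy; rewrite /hcomp prB // hx hy. Qed.
Lemma Hz i x n : (i < p)%N -> H i x -> H i (x *~ n).
Proof. by move=> ip hx; rewrite /hcomp prz // hx. Qed.
Lemma Hsum i (I : eqType) (s : seq I) (f : I -> R) : (i < p)%N ->
  (forall x, x \in s -> H i (f x)) -> H i (\sum_(x <- s) f x).
Proof.
move=> ip; elim: s => [|a s IH] hs; first by rewrite big_nil; exact: Hzero.
rewrite big_cons; apply: HD => //; first by apply: hs; rewrite mem_head.
by apply: IH => x xs; apply: hs; rewrite inE xs orbT.
Qed.
Lemma Hpr i x : (i < p)%N -> H i (pr i x).
Proof. by move=> ip; rewrite /hcomp prpr // eqxx. Qed.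
Lemma pr_hom i j x : (i < p)%N -> (j < p)%N -> H j x ->
  pr i x = if i == j then x else 0.
Proof. by move=> ip jp hx; rewrite -hx prpr // hx. Qed.
Lemma HM i j x y : (i < p)%N -> (j < p)%N -> H i x -> H j y ->
  H ((i + j) %% p)%N (x * y).
Proof. by move=> ip jp hx hy; apply: prM. Qed.

Lemma H1 : H 0 1.
Proof.
set e := pr 0 1.
have key : forall j x, (j < p)%N -> H j x -> e * x = x.
  move=> j x jp hx.
  have : pr j x = pr j (\sum_(i < p) pr i 1 * x).
    by rewrite -mulr_suml -pr_sumE mul1r.
  rewrite hx prsum //.
  rewrite (bigD1 (Ordinal p_gt0)) //= big1 ?addr0.
    by rewrite (pr_hom jp (ltn_pmod _ p_gt0) (HM p_gt0 jp (Hpr _ p_gt0) hx)) add0n modn_small // eqxx.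
  move=> i /= ne0; rewrite (pr_hom jp (ltn_pmod _ p_gt0) (HM (ltn_ord i) jp (Hpr _ (ltn_ord i)) hx)).
  case: eqP => // /esym h; exfalso; move: ne0; apply/negP; rewrite negbK.
  apply/eqP/val_inj => /=; move: h.
  have ip := ltn_ord i.
  case: (posnP i) => // i0 h.
  have : ((i + j) %% p = (p + j) %% p)%N by rewrite h -modnDml modnn add0n modn_small.
  move/eqP; rewrite eqn_modDr modn_small // modnn => /eqP ->; done.
have e1 : e * 1 = 1.
  transitivity (\sum_(i < p) e * pr i 1); first by rewrite -mulr_sumr -pr_sumE.
  rewrite [RHS](pr_sumE 1); apply: eq_bigr => i _; apply: (key i) => //.
  exact: Hpr.
rewrite /hcomp -/e; by rewrite -[e]mulr1 e1.
Qed.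


Lemma modred n : (n < p + p)%N -> (n %% p = if n < p then n else n - p)%N.
Proof. case: ifP => h. by rewrite modn_small. move=> h2.
have -> : n = ((n - p) + p)%N by lia. rewrite modnDr modn_small; lia. Qed.
Lemma ar_a1 i l : (i < p)%N -> (l < p)%N -> (0 == (i+l)%%p)%N = (l == (p - i)%%p)%N.
Proof. move=> *. have := p_gt0; move=> *.
rewrite (@modred (i + l)); last lia. rewrite (@modred (p - i)); last lia.
case: ifP; case: ifP; move=> *; apply/eqP/eqP; lia. Qed.
Lemma ar_a2 k i j q: (0 < j < p)%N -> (i < p)%N -> (k * i = q * p + j)%N -> ((k * (p - i)) %% p = p - j)%N.
Proof. move=> *. have := p_gt0; move=> *. have: (q < k)%N by nia. move=> qk.
have -> : (k * (p - i) = (k - q - 1) * p + (p - j))%N by nia. rewrite modnMDl modn_small //; lia. Qed.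
Lemma ar_a3 a b : (a < p)%N -> (((p - a) %% p + (b + a) %% p) %% p = b %% p)%N.
Proof. move=> ap; rewrite modnDm. have -> : (p - a + (b + a) = b + p)%N by lia. by rewrite modnDr. Qed.
Lemma ar_sub0 i : (0 < i < p)%N -> ((i + (p - i)) %% p = 0)%N.
Proof. by move=> /andP [_ ip]; rewrite subnKC ?modnn // ltnW. Qed.

Definition idl (P : R -> Prop) :=
  [/\ forall x, P x -> H 0 x, P 0, (forall x y, P x -> P y -> P (x - y)) &
      (forall s x, H 0 s -> P x -> P (s * x))].

Lemma idlD P x y : idl P -> P x -> P y -> P (x + y).
Proof.
move=> [_ P0 PB _] Px Py; have := PB x (0 - y) Px (PB 0 y P0 Py).
by rewrite sub0r opprK.
Qed.

Lemma idlz P x n : idl P -> P x -> P (x *~ n).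
Proof.
move=> [_ _ _ PM] Px; have := PM (1 *~ n) x (Hz n p_gt0 H1) Px.
by rewrite mulrzl.
Qed.

Lemma addspan_idl (Sg : R -> Prop) : (forall x, Sg x -> H 0 x) ->
  (forall s x, H 0 s -> Sg x -> Sg (s * x)) -> idl (addspan Sg).
Proof.
move=> h0 hM; split.
- apply: as_ind; first exact: Hzero p_gt0.
    by move=> x y; apply: HD p_gt0.
  by move=> x n /h0 hx; exact: (Hz n p_gt0 hx).
- exact: as0.
- by move=> x y; apply: asB.
- by move=> s x hs; apply: as_mul => y; apply: hM.
Qed.

Lemma gen_H0 i a b : (0 < i < p)%N -> H i a -> H (p - i) b -> H 0 (a * b).
Proof.
move=> hi ha hb; have /andP [i0 ip] := hi.
have pi : (p - i < p)%N by lia.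
by have := HM ip pi ha hb; rewrite ar_sub0.
Qed.

Lemma H0M i s x : (i < p)%N -> H 0 s -> H i x -> H i (s * x).
Proof. by move=> ip hs hx; have := HM p_gt0 ip hs hx; rewrite add0n modn_small. Qed.

Definition Jset i := prodspan (H i) (H (p - i)).

Lemma J_idl i : (0 < i < p)%N -> idl (Jset i).
Proof.
move=> hi; have /andP [_ ip] := hi; apply: addspan_idl.
  by move=> x [a [b [ha hb ->]]]; apply: (gen_H0 hi).
move=> s x hs [a [b [ha hb ->]]]; exists (s * a), b; split => //.
  exact: H0M.
by rewrite mulrA.
Qed.

Lemma I_idl : idl (fixed_ideal p pr).
Proof.
apply: addspan_idl.
  by move=> x [i [a [b [hi ha hb ->]]]]; apply: (gen_H0 hi).
move=> s x hs [i [a [b [hi ha hb ->]]]]; exists i, (s * a), b; split => //.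
  by have /andP [_ ip] := hi; exact: H0M.
by rewrite mulrA.
Qed.

Lemma J_sub_I i x : (0 < i < p)%N -> Jset i x -> fixed_ideal p pr x.
Proof.
move=> hi; apply: as_mono => y [a [b [ha hb ->]]]; by exists i, a, b.
Qed.

Lemma Hpow i a k : (i < p)%N -> H i a -> H ((k * i) %% p)%N (a ^+ k).
Proof.
move=> ip ha; elim: k => [|k IH]; first by rewrite expr0 mul0n mod0n; exact: H1.
rewrite exprS; have := HM ip (ltn_pmod _ p_gt0) ha IH.
by rewrite modnDmr mulSn.
Qed.

Lemma H0pow x k : H 0 x -> H 0 (x ^+ k).
Proof. by move=> hx; have := Hpow k p_gt0 hx; rewrite muln0 mod0n. Qed.

Lemma prime_pow P x k : prime_ideal_in (H 0) P -> H 0 x -> P (x ^+ k.+1) -> P x.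
Proof.
move=> [_ [_ Pp]] hx; elim: k => [|k IH]; first by rewrite expr1.
rewrite exprS => /Pp []; [done|exact: H0pow|done|exact: IH].
Qed.

Definition ext (M : R -> Prop) z := fun w => exists m r, [/\ M m, H 0 r & w = m + r * z].

Lemma ext_idl M z : idl M -> H 0 z -> idl (ext M z).
Proof.
move=> [M0 M00 MB MM] hz; split.
- move=> w [m [r [Mm hr ->]]]; apply: HD p_gt0 (M0 _ Mm) _; exact: H0M p_gt0 hr hz.
- by exists 0, 0; split; rewrite ?mul0r ?addr0 //; exact: Hzero p_gt0.
- move=> x y [m1 [r1 [M1 h1 ->]]] [m2 [r2 [M2 h2 ->]]].
  exists (m1 - m2), (r1 - r2); split; [exact: MB|exact: HB p_gt0 h1 h2|].
  by rewrite mulrBl opprD addrACA.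
- move=> s x hs [m [r [Mm hr ->]]]; exists (s * m), (s * r); split.
  + exact: MM.
  + exact: H0M p_gt0 hs hr.
  + by rewrite mulrDr mulrA.
Qed.

Lemma krull J : idl J -> ~ J 1 ->
  exists P, prime_ideal_in (H 0) P /\ (forall x, J x -> P x).
Proof.
move=> iJ nJ1.
pose Pp (A : set R) := A = set0 \/ [/\ idl A, (forall x, J x -> A x) & ~ A 1].
have [M [PM Mmax]] : exists A, Pp A /\ (forall B, (A `<` B)%classic -> ~ Pp B).
  apply: Zorn_bigcup => Fm FP Ftot.
  have idlX : forall X, Fm X -> forall x, X x -> [/\ idl X, (forall x, J x -> X x) & ~ X 1].
    move=> X FX x Xx; case: (FP X FX) => // X0; by rewrite X0 in Xx.
  case: (pselect (exists X, Fm X /\ exists x, X x)) => [[X0 [FX0 [x0 X0x0]]]|none].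
  - right; have [iX0 JX0 _] := idlX X0 FX0 x0 X0x0; split.
    + split.
      * move=> x [X FX Xx]; have [[h _ _ _] _ _] := idlX X FX x Xx; exact: h.
      * by exists X0 => //; case: iX0.
      * move=> x y [X FX Xx] [Y FY Yy].
        case: (Ftot X Y FX FY) => sub.
          exists Y => //; have [[_ _ hB _] _ _] := idlX Y FY y Yy; exact: hB (sub _ Xx) Yy.
        exists X => //; have [[_ _ hB _] _ _] := idlX X FX x Xx; exact: hB Xx (sub _ Yy).
      * move=> s x hs [X FX Xx]; exists X => //.
        have [[_ _ _ hM] _ _] := idlX X FX x Xx; exact: hM.
    + by move=> x Jx; exists X0 => //; apply: JX0.
    + by move=> [X FX X1]; have [_ _] := idlX X FX 1 X1.
  - left; apply/seteqP; split => x //; move=> [X FX Xx]; apply: none.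
    by exists X; split => //; exists x.
case: PM => [M0|[iM JM nM1]].
  exfalso; apply: (Mmax J); last by right; split.
  rewrite M0; split => // h; have [_ J0 _ _] := iJ; exact: h _ J0.
exists M; split => //; split; first exact: iM.
split=> // x y hx hy Pxy.
case: (pselect (M x)) => Mx; first by left.
case: (pselect (M y)) => My; first by right.
exfalso.
have ext1 : forall z, H 0 z -> ~ M z -> ext M z 1.
  move=> z hz nMz; apply: contrapT => ne1.
  have ie := ext_idl iM hz.
  apply: (Mmax (ext M z)).
    split.
      by move=> w Mw; exists w, 0; split; rewrite ?mul0r ?addr0 //; exact: Hzero p_gt0.
    move=> h; apply: nMz; apply: h; exists 0, 1; split; rewrite ?mul1r ?add0r //.
      by case: iM.
    exact: H1.
  right; split => // w Jw; exists w, 0; split; rewrite ?mul0r ?addr0 //; last exact: Hzero p_gt0.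
  exact: JM.
have [m1 [r1 [M1 h1 e1]]] := ext1 x hx Mx.
have [m2 [r2 [M2 h2 e2]]] := ext1 y hy My.
apply: nM1.
have -> : 1 = (m2 + r2 * y) * m1 + (r1 * x) * m2 + (r1 * r2) * (x * y).
  have -> : (m2 + r2 * y) * m1 + (r1 * x) * m2 + (r1 * r2) * (x * y)
          = (m1 + r1 * x) * (m2 + r2 * y) by ring.
  by rewrite -e1 -e2 mulr1.
have [M0 _ _ MM] := iM.
apply: idlD => //; first apply: idlD => //.
- apply: MM => //; apply: HD p_gt0 (M0 _ M2) _; exact: H0M p_gt0 h2 hy.
- apply: MM => //; exact: H0M p_gt0 h1 hx.
- apply: MM => //; exact: H0M p_gt0 h1 h2.
Qed.

Definition Kp := forall j, (0 < j < p)%N -> Jset j 1.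

Lemma L1 : fixed_ideal p pr 1 -> Kp.
Proof.
move=> I1 j hj; apply: contrapT => nJ.
have [P [Pp PJ]] := krull (J_idl hj) nJ.
have [[P0 P00 PB PM] [nP1 Pprime]] := Pp.
have iP : idl P by split.
have [i [a [b [hi ha hb nPab]]]] :
    exists i a b, [/\ (0 < i < p)%N, H i a, H (p - i) b & ~ P (a * b)].
  apply: contrapT => none; apply: nP1; move: I1; apply: as_ind => //.
    by move=> x y; apply: idlD.
  move=> x n [i [a [b [hi ha hb ->]]]]; apply: idlz => //.
  by apply: contrapT => nP; apply: none; exists i, a, b.
have /andP [i0 ip] := hi; have /andP [j0 jp] := hj.
have cop : coprime i p.
  by rewrite coprime_sym prime_coprime // gtnNdvd.
case/(coprimeP _ i0): cop => [[u1 u2] /= eu].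
pose k := (j * u1)%N.
have ki : (k * i = (j * u2) * p + j)%N.
  have e : (u1 * i = u2 * p + 1)%N by lia.
  by rewrite /k -mulnA e; nia.
have kj : ((k * i) %% p = j)%N by rewrite ki modnMDl modn_small.
have [k' ek] : exists k', k = k'.+1.
  by exists k.-1; case: (posnP k) => [k00|]; [move: kj; rewrite k00 mul0n mod0n; lia|lia].
have pi : (p - i < p)%N by lia.
have ha' := Hpow k ip ha; rewrite kj in ha'.
have hb' := Hpow k pi hb; rewrite (ar_a2 hj ip ki) in hb'.
have Jab : Jset j ((a * b) ^+ k) by rewrite exprMn; apply: as_in; exists (a ^+ k), (b ^+ k).
rewrite ek in Jab; apply: nPab; exact: prime_pow Pp (gen_H0 hi ha hb) (PJ _ Jab).
Qed.

Lemma Ulist : Kp -> forall k, (k < p)%N -> exists U : seq (R * R),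
  in_pairs (H k) (H ((p - k) %% p)) U /\ 1 = \sum_(c <- U) c.1 * c.2.
Proof.
move=> K k kp; case: (posnP k) => [->|k0].
  exists [:: (1, 1)]; split; last by rewrite big_seq1 mulr1.
  by move=> c; rewrite inE => /eqP -> /=; rewrite subn0 modnn; split; exact: H1.
have hk : (0 < k < p)%N by rewrite k0 kp.
have [s [hs e]] := prodspan_list (fun a n ha => Hz n kp ha) (K k hk).
exists s; split => //; rewrite modn_small //; lia.
Qed.

Lemma pow_H i n (a : 'I_n -> R) : (i < p)%N -> (forall j, H i (a j)) ->
  H ((n * i) %% p)%N (\prod_(j < n) a j).
Proof.
move=> ip; elim: n a => [|n IH] a ha.
  by rewrite big_ord0 mul0n mod0n; exact: H1.
rewrite big_ord_recl; have := HM ip (ltn_pmod _ p_gt0) (ha ord0) (IH (fun j => a (lift ord0 j)) (fun j => ha _)).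
by rewrite modnDmr mulSn.
Qed.

Lemma powspan_H0 i x : (i < p)%N -> powspan (H i) p x -> H 0 x.
Proof.
move=> ip; apply: as_ind; first exact: Hzero p_gt0.
  by move=> y z; apply: HD p_gt0.
move=> y n [a [ha ->]]; apply: Hz => //; first exact: p_gt0.
by have := pow_H ip ha; rewrite modnMr.
Qed.

Lemma pow_cons i n u y : H i u -> powspan (H i) n y -> powspan (H i) n.+1 (u * y).
Proof.
move=> hu; apply: as_mul2 => g [a [ha ->]].
pose a' := fun j : 'I_n.+1 => if unlift ord0 j is Some j' then a j' else u.
exists a'; split.
  by move=> j; rewrite /a'; case: unlift.
rewrite big_ord_recl /a' unlift_none; congr (_ * _); apply: eq_bigr => j _.
by rewrite liftK.
Qed.

Lemma pow_gen i : (0 < i < p)%N -> Kp -> forall n c,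
  H (((n.+1) * i) %% p)%N c -> powspan (H i) n.+1 c.
Proof.
move=> hi K; have /andP [i0 ip] := hi.
have [U [hU eU]] := Ulist K ip.
elim=> [|n IH] c hc.
  apply: as_in; exists (fun _ => c); split => //; last by rewrite big_ord1.
  by move=> _; move: hc; rewrite mul1n modn_small.
have -> : c = \sum_(uv <- U) uv.1 * (uv.2 * c).
  by rewrite -[LHS]mul1r eU mulr_suml; apply: eq_bigr => uv _; rewrite mulrA.
apply: as_sum => uv uvU; have [h1 h2] := hU uv uvU.
apply: pow_cons => //; apply: IH.
have := HM (ltn_pmod _ p_gt0) (ltn_pmod _ p_gt0) h2 hc.
by rewrite (mulSn n.+1) (addnC i) ar_a3.
Qed.

Lemma pow1_gen n (a : 'I_n -> R) : n = p -> (forall j, H 1 (a j)) ->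
  fixed_ideal p pr (\prod_(j < n) a j).
Proof.
case: n a => [|n] a e ha; first by move: p_gt0; rewrite -e.
rewrite big_ord_recl; apply: as_in; exists 1%N, (a ord0), (\prod_(j < n) a (lift ord0 j)).
split => //; first by rewrite p_gt1.
have := pow_H (p_gt1) (fun j => ha (lift ord0 j)).
by rewrite muln1 modn_small -e ?subSS ?subn0 // -e.
Qed.

Lemma pow1_I x : powspan (H 1) p x -> fixed_ideal p pr x.
Proof.
apply: as_ind; first exact: as0.
  by move=> y z; apply: asD.
move=> y n [a [ha ->]]; apply: idlz; first exact: I_idl.
exact: pow1_gen.
Qed.

Lemma ar_a4 a : (a < p)%N -> (((p - a) %% p + a) %% p = 0)%N.
Proof. by move=> ap; rewrite modnDml subnK ?modnn // ltnW. Qed.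

Lemma K_5 : Kp -> forall i, (0 < i < p)%N -> forall x, Jset i x <-> H 0 x.
Proof.
move=> K i hi x; have [J0 _ _ JM] := J_idl hi; split; first exact: J0.
by move=> hx; rewrite -[x]mulr1; apply: JM => //; apply: K.
Qed.

Lemma decomp_one (U : seq (R * R)) x : 1 = \sum_(c <- U) c.1 * c.2 ->
  x = \sum_(uv <- U) (uv.2 * x) * uv.1.
Proof.
move=> eU; rewrite -[LHS]mulr1 eU mulr_sumr; apply: eq_bigr => uv _.
by ring.
Qed.

Lemma decomp_one' (U : seq (R * R)) c : 1 = \sum_(c <- U) c.1 * c.2 ->
  c = \sum_(uv <- U) uv.1 * (uv.2 * c).
Proof.
move=> eU; rewrite -[LHS]mul1r eU mulr_suml; apply: eq_bigr => uv _.
by rewrite mulrA.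
Qed.

Lemma K_6 : Kp -> forall k l, (k < p)%N -> (l < p)%N ->
  tensor_iso (H 0) (H k) (H l) *%R (H ((k + l) %% p)%N).
Proof.
move=> K k l kp lp; have [U [hU eU]] := Ulist K kp.
have klp : ((k + l) %% p < p)%N by apply: ltn_pmod; exact: p_gt0.
have hB : forall uv c, uv \in U -> H ((k + l) %% p)%N c -> H l (uv.2 * c).
  move=> uv c uvU hc; have [_ h2] := hU uv uvU.
  have := HM (ltn_pmod _ p_gt0) klp h2 hc.
  by rewrite (addnC k) ar_a3 // modn_small.
split.
- move=> s hs; apply: Hsum => // x xs; have [h1 h2] := hs x xs; exact: HM.
- move=> c hc; exists (CU U c); split.
    move=> x /mapP [uv uvU ->] /=; have [h1 _] := hU uv uvU; split => //.
    exact: hB.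
  by rewrite big_map /=; apply: decomp_one'.
- apply: (@canon_inj _ _ _ _ _ _ _ (H ((k + l) %% p)%N) (CU U)).
  + exact: Hzero.
  + by move=> x y; apply: HD.
  + by move=> a b ha hb; apply: HM.
  + by apply: CU_zero => uv uvU; have [] := hU uv uvU.
  + move=> x y hx hy; apply: CU_add => uv uvU; have [h1 _] := hU uv uvU.
    by split => //; apply: hB.
  + move=> a b ha hb; apply: pair_canon => //.
    * exact: Hzero.
    * by move=> y z; apply: HD.
    * move=> uv uvU; have [h1 h2] := hU uv uvU.
      have h0 : H 0 (uv.2 * a).
        by have := HM (ltn_pmod _ p_gt0) kp h2 ha; rewrite ar_a4.
      by split => //; apply: H0M.
    * exact: decomp_one.
Qed.

Lemma sum_pr j k (U : seq (R * R)) (B : R -> Prop) c : (j < p)%N -> (k < p)%N ->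
  in_pairs (H k) B U ->
  \sum_(uv <- U) pr j uv.1 * (uv.2 * c) =
  if j == k then \sum_(uv <- U) uv.1 * (uv.2 * c) else 0.
Proof.
move=> jp kp; elim: U => [|uv U IH] hU; first by rewrite !big_nil; case: ifP.
rewrite !big_cons IH; last by move=> x xU; apply: hU; rewrite inE xU orbT.
have [h1 _] := hU uv (mem_head _ _).
by rewrite (pr_hom jp kp h1); case: ifP => _; rewrite ?mul0r ?addr0.
Qed.

Lemma flat_map1 (I T : Type) (l : seq I) (f : I -> T) :
  flatten [seq [:: f x] | x <- l] = map f l.
Proof. by elim: l => //= x l ->. Qed.

Lemma K_7 : Kp -> tensor_iso (H 0) (fun _ => True) (fun _ => True) (Phi_map p pr)
      (fun _ => True).
Proof.
move=> K.
have hU : forall k : 'I_p, exists U : seq (R * R),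
    in_pairs (H k) (H ((p - k) %% p)) U /\ 1 = \sum_(c <- U) c.1 * c.2.
  by move=> k; apply: Ulist.
have [Uf hUf] := choice hU.
pose CF (f : {ffun 'I_p -> R}) :=
  flatten [seq CU (Uf k) (f k) | k <- index_enum 'I_p].
split => //.
- move=> f _; exists (CF f); split => //.
  apply/ffunP => j; rewrite sum_ffunE big_flatten /= big_map.
  rewrite (bigD1 j) //= [X in _ + X]big1 ?addr0.
    rewrite /CU big_map.
    have [h1 h2] := hUf j.
    rewrite (eq_bigr (fun uv => pr j uv.1 * (uv.2 * f j))); last by move=> uv _; rewrite ffunE.
    by rewrite (sum_pr _ (ltn_ord j) (ltn_ord j) h1) eqxx -decomp_one'.
  move=> k hk; rewrite /CU big_map.
  have [h1 h2] := hUf k.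
  rewrite (eq_bigr (fun uv => pr j uv.1 * (uv.2 * f k))); last by move=> uv _; rewrite ffunE.
  rewrite (sum_pr _ (ltn_ord j) (ltn_ord k) h1).
  by rewrite val_eqE eq_sym (negbTE hk).
- apply: (@canon_inj _ _ _ _ _ _ _ (fun _ => True) CF) => //.
  + apply: te_flat_nil => k _; rewrite ffunE; apply: CU_zero => //.
  + move=> f g _ _.
    apply: (te_trans (@te_flat_merge F R (H 0) (fun _ => True) (fun _ => True) _
      (index_enum 'I_p) (fun k => CU (Uf k) (f k)) (fun k => CU (Uf k) (g k)))).
    rewrite /CF; apply: te_flat => k _; rewrite ffunE; exact: CU_add.
  + move=> a b _ _.
    rewrite {1}(_ : a = \sum_(y <- [seq pr (k : 'I_p) a | k <- index_enum 'I_p]) y); last first.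
      by rewrite big_map; exact: pr_sumE.
    apply: te_trans; first exact: (@te_addl_list F R (H 0) (fun _ => True) (fun _ => True)
      [seq pr (k : 'I_p) a | k <- index_enum 'I_p] b I (fun _ _ _ _ => I) I (fun _ _ => I)).
    rewrite -map_comp -flat_map1 /CF; apply: te_flat => k _ /=.
    rewrite ffunE; have [h1 h2] := hUf k; apply: pair_canon => //.
      move=> uv uvU; have [_ hv] := h1 uv uvU; split => //.
      have := HM (ltn_pmod _ p_gt0) (ltn_ord k) hv (Hpr _ (ltn_ord k)).
      by rewrite ar_a4.
    exact: decomp_one.
Qed.

Lemma pr0_mul1 x y : H 1 x -> pr 0 (x * y) = x * pr (p - 1) y.
Proof.
move=> hx; have p0 := p_gt0; have p1 := p_gt1.
have pm : (p - 1 < p)%N by lia.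
rewrite {1}(pr_sumE y) mulr_sumr prsum //.
rewrite (bigD1 (Ordinal pm)) //= [X in _ + X]big1 ?addr0.
  rewrite (pr_hom p0 (ltn_pmod _ p0) (HM p1 pm hx (Hpr _ pm))).
  by rewrite ar_sub0 ?p1.
move=> l hl.
have lp := ltn_ord l.
rewrite (pr_hom p0 (ltn_pmod _ p0) (HM p1 lp hx (Hpr _ lp))) ar_a1 // modn_small //.
case: eqP => // e; exfalso; move: hl; apply/negP; rewrite negbK.
by apply/eqP/val_inj.
Qed.

Lemma seven_I1 : tensor_iso (H 0) (fun _ => True) (fun _ => True) (Phi_map p pr)
      (fun _ => True) -> fixed_ideal p pr 1.
Proof.
move=> [_ surj _].
pose o1 := Ordinal p_gt1.
pose f := [ffun k : 'I_p => if k == o1 then (1 : R) else 0].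
have [s [_ e]] := surj f I.
have e1 := congr1 (fun g : {ffun 'I_p -> R} => g o1) e; rewrite /= ffunE eqxx sum_ffunE in e1.
rewrite (eq_bigr (fun x => pr 1 x.1 * x.2)) in e1; last by move=> x _; rewrite ffunE.
have e2 : pr 0 1 = pr 0 (\sum_(x <- s) pr 1 x.1 * x.2) by rewrite -e1.
rewrite H1 prsum in e2; last exact: p_gt0.
rewrite e2; apply: as_sum => x _; apply: as_in.
exists 1%N, (pr 1 x.1), (pr (p - 1) x.2); split.
- by rewrite p_gt1.
- exact: Hpr p_gt1.
- by apply: Hpr; have := p_gt0; lia.
- by rewrite pr0_mul1 //; exact: Hpr p_gt1.
Qed.

Lemma six_K : (forall k l, (k < p)%N -> (l < p)%N ->
       tensor_iso (H 0) (H k) (H l) ( *%R) (H ((k + l) %% p)%N)) -> Kp.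
Proof.
move=> h6 j hj; have /andP [j0 jp] := hj; have pj : (p - j < p)%N by lia.
have [_ surj _] := h6 j (p - j)%N jp pj.
have h01 : H ((j + (p - j)) %% p)%N 1 by rewrite ar_sub0 //; exact: H1.
have [s [hs e]] := surj 1 h01.
rewrite e; exact: list_prodspan.
Qed.

Lemma main_sec :
  [<->
    spec_quot_empty (hcomp pr 0) (fixed_ideal p pr);
    (forall x, fixed_ideal p pr x <-> hcomp pr 0 x);
    (forall i, (0 < i < p)%N -> forall x, powspan (hcomp pr i) p x <-> hcomp pr 0 x);
    (forall x, powspan (hcomp pr 1) p x <-> hcomp pr 0 x);
    (forall i, (0 < i < p)%N ->
       forall x, prodspan (hcomp pr i) (hcomp pr (p - i)%N) x <-> hcomp pr 0 x);
    (forall k l, (k < p)%N -> (l < p)%N ->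
       tensor_iso (hcomp pr 0) (hcomp pr k) (hcomp pr l) ( *%R) (hcomp pr ((k + l) %% p)%N));
    tensor_iso (hcomp pr 0) (fun _ => True) (fun _ => True) (Phi_map p pr)
      (fun _ => True)
  ].
Proof.
tfae.
- move=> h1 x; have [I0 _ _ IM] := I_idl; split; first exact: I0.
  move=> hx; have I1 : fixed_ideal p pr 1.
    apply: contrapT => n1; have [P [Pp PI]] := krull I_idl n1; apply: h1.
    by exists P.
  by rewrite -[x]mulr1; apply: IM.
- move=> h2 i hi x; have K := L1 ((h2 1).2 H1); have /andP [_ ip] := hi.
  split; first exact: powspan_H0.
  move=> hx; rewrite -(prednK p_gt0); apply: pow_gen => //.
  by rewrite prednK ?p_gt0 // modnMr.
- by move=> h3; apply: h3; rewrite p_gt1.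
- move=> h4; have K := L1 (pow1_I ((h4 1).2 H1)); exact: K_5.
- move=> h5; have K : Kp by move=> j hj; apply/(h5 j hj); exact: H1.
  exact: K_6.
- move=> h6; exact: K_7 (six_K h6).
- move=> h7 [P [Pp PI]]; have [_ [nP1 _]] := Pp; exact: nP1 (PI _ (seven_I1 h7)).
Qed.
End Grad.

Theorem proposition3p2 (F : fieldType) (R : comAlgType F) (p : nat)
    (pr : nat -> R -> R) :
  prime p -> Zp_grading p pr ->
  [<->
    (* (1) X^G = Spec(R_0 / I) is empty *)
    spec_quot_empty (hcomp pr 0) (fixed_ideal p pr);
    (* (2) I = R_0 *)
    (forall x, fixed_ideal p pr x <-> hcomp pr 0 x);
    (* (3) R_i^p = R_0 for i = 1..p-1 *)
    (forall i, (0 < i < p)%N -> forall x, powspan (hcomp pr i) p x <-> hcomp pr 0 x);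
    (* (4) R_1^p = R_0 *)
    (forall x, powspan (hcomp pr 1) p x <-> hcomp pr 0 x);
    (* (5) R_i R_{p-i} = R_0 for i = 1..p-1 *)
    (forall i, (0 < i < p)%N ->
       forall x, prodspan (hcomp pr i) (hcomp pr (p - i)%N) x <-> hcomp pr 0 x);
    (* (6) R_k (x)_{R_0} R_l -> R_{k+l} is an isomorphism *)
    (forall k l, (k < p)%N -> (l < p)%N ->
       tensor_iso (hcomp pr 0) (hcomp pr k) (hcomp pr l) ( *%R) (hcomp pr ((k + l) %% p)%N));
    (* (7) Phi : R (x)_{R_0} R -> F[t]/(t^p-1) (x)_F R is an isomorphism *)
    tensor_iso (hcomp pr 0) (fun _ => True) (fun _ => True) (Phi_map p pr)
      (fun _ => True)
  ].
Proof.
move=> pP G; exact: (main_sec pP G).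
Qed.
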